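(* For every positive integer $n$, let $c_n$ be the smallest positive integer such that $c_n P' \in E_n$ for every $P \in E_n$. Then $$c_n = \mathrm{lcm}(1,2,\dots,n).$$
   Context: For $n \in \mathbb{N}$, $E_n$ denotes the set of polynomials $P \in \mathbb{C}[X]$ of degree $\leq n$ (including the zero polynomial) such that $P(\mathbb{Z}) \subset \mathbb{Z}$ (integer-valued polynomials of degree at most $n$). $P'$ denotes the derivative of $P$. *)

(* Defs.v *)
From HB Require Import structures.
From mathcomp Require Import all_boot all_order all_algebra all_field.
Set Implicit Arguments. Unset Strict Implicit. Unset Printing Implicit Defensive.
Import Order.TTheory GRing.Theory Num.Theory.
Local Open Scope ring_scope.

(* Complex numbers are modelled by algC (algebraic complex numbers). *)

Definition int_valued (P : {poly algC}) : Prop :=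
  forall z : int, P.[z%:~R] \is a Num.int.

(* E_n : integer-valued polynomials of degree <= n (zero polynomial included) *)
Definition inE (n : nat) (P : {poly algC}) : Prop :=
  (size P <= n.+1)%N /\ int_valued P.

Definition admissible (n c : nat) : Prop :=
  forall P : {poly algC}, inE n P -> inE n (c%:R *: P^`()).

Definition lcm_upto (n : nat) : nat := \big[lcmn/1%N]_(1 <= i < n.+1) i.

(* Main.v *)
Require Import Defs.
From HB Require Import structures.
From mathcomp Require Import all_boot all_order all_algebra all_field.
From mathcomp Require Import ring zify.
Set Implicit Arguments. Unset Strict Implicit. Unset Printing Implicit Defensive.
Import Order.TTheory GRing.Theory Num.Theory.
Local Open Scope ring_scope.

Definition B (k : nat) : {poly algC} :=
  (k`!%:R)^-1 *: \prod_(0 <= i < k) ('X - (i%:R)%:P).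

Lemma hornerB k x : (B k).[x] = (k`!%:R)^-1 * \prod_(0 <= i < k) (x - i%:R).
Proof. by rewrite /B hornerZ horner_prod; under eq_bigr do rewrite hornerXsubC. Qed.

Lemma sizeB k : size (B k) = k.+1.
Proof.
rewrite /B size_scale ?size_prod_XsubC ?size_iota ?subn0 //.
by rewrite invr_eq0 pnatr_eq0 -lt0n fact_gt0.
Qed.

Lemma B0 : B 0 = 1.
Proof. by rewrite /B big_geq // fact0 invr1 scale1r. Qed.

Lemma BS0 k : (B k.+1).[0] = 0.
Proof. by rewrite hornerB big_nat_recl // sub0r oppr0 mul0r mulr0. Qed.

Lemma pascal k x : (B k.+1).[x+1] - (B k.+1).[x] = (B k).[x].
Proof.
rewrite !hornerB big_nat_recl // big_nat_recr //=.
have -> : \prod_(0 <= i < k) (x + 1 - i.+1%:R) = \prod_(0 <= i < k) (x - i%:R).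
  by apply: eq_bigr => i _; rewrite -addn1 natrD; ring.
rewrite factS natrM subr0.
set p := \prod_(0 <= i < k) (x - i%:R).
have h1 : (k.+1%:R : algC) != 0 by rewrite pnatr_eq0.
have h2 : (k`!%:R : algC) != 0 by rewrite pnatr_eq0 -lt0n fact_gt0.
rewrite -natr1. field. by rewrite h2 natr1 h1.
Qed.

Lemma ivE P : int_valued P <->
  (forall m : nat, P.[m%:R] \is a Num.int /\ P.[- m%:R] \is a Num.int).
Proof.
split=> [h m | h z].
  split; first by have := h m; rewrite -pmulrn.
  by have := h (- m%:Z); rewrite -nmulrn.
case: z => m; first by rewrite -pmulrn; case: (h m).
by rewrite NegzE -nmulrn; case: (h m.+1).
Qed.

Lemma B_int k : int_valued (B k).
Proof.
apply/ivE; elim: k => [|k IH] m.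
  by rewrite B0 !hornerC rpred1.
elim: m => [|m [IHp IHn]].
  by rewrite oppr0 BS0 rpred0.
have e1 := pascal k m%:R.
have e2 := pascal k (- m.+1%:R).
case: (IH m) => Ip In; case: (IH m.+1) => Ip' In'.
have -> : (B k.+1).[m.+1%:R] = (B k.+1).[m%:R] + (B k).[m%:R].
  by rewrite -e1 natr1; ring.
have -> : (B k.+1).[- m.+1%:R] = (B k.+1).[- m%:R] - (B k).[- m.+1%:R].
  by rewrite -e2 -natr1 opprD addrNK; ring.
by split; [apply: rpredD | apply: rpredB].
Qed.

Lemma prodN k : \prod_(0 <= i < k) (0 - i.+1%:R : algC) = (-1)^+k * k`!%:R.
Proof.
elim: k => [|k IH]; first by rewrite big_geq // fact0 expr0 mulr1.
by rewrite big_nat_recr //= IH factS natrM exprS; ring.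
Qed.

Lemma dB0 k : (B k.+1)^`().[0] = (-1)^+k / k.+1%:R.
Proof.
rewrite /B derivZ hornerZ big_nat_recl // derivM polyC0 subr0 derivX mul1r hornerD.
rewrite hornerM hornerX mul0r addr0 horner_prod.
under eq_bigr do rewrite hornerXsubC.
rewrite prodN factS natrM.
have h1 : (k.+1%:R : algC) != 0 by rewrite pnatr_eq0.
have h2 : (k`!%:R : algC) != 0 by rewrite pnatr_eq0 -lt0n fact_gt0.
rewrite -natr1 in h1 *. field. by rewrite h1 h2.
Qed.

Definition Dl (P : {poly algC}) := P \Po ('X + 1) - P.

Lemma hornerDl P x : (Dl P).[x] = P.[x+1] - P.[x].
Proof. by rewrite /Dl hornerD hornerN horner_comp hornerD hornerX hornerC. Qed.

Lemma sizeDl P : (size (Dl P) <= (size P).-1)%N.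
Proof.
have s2 : size ('X + 1 : {poly algC}) = 2%N by rewrite -polyC1 size_XaddC.
have sc := size_comp_poly2 P s2.
apply/leq_sizeP => j hj; rewrite coefB.
have [hs|hs] := leqP (size P) j.
  by rewrite !nth_default ?subr0 // sc.
have ej : j = (size P).-1 by move: hj hs; case: (size P) => //= s; lia.
have lc : lead_coef (P \Po ('X + 1)) = lead_coef P * lead_coef ('X + 1) ^+ (size P).-1 by apply: lead_coef_comp; rewrite s2.
have := lc; rewrite lead_coefE sc -ej => ->.
by rewrite lead_coefE -ej -polyC1 lead_coefXaddC expr1n mulr1 subrr.
Qed.

Lemma Dl_int P : int_valued P -> int_valued (Dl P).
Proof.
move=> h z; rewrite hornerDl.
have -> : z%:~R + 1 = (z + 1)%:~R :> algC by rewrite intrD.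
by apply: rpredB; apply: h.
Qed.

Lemma nat_roots (S : {poly algC}) : (forall i : nat, S.[i%:R] = 0) -> S = 0.
Proof.
move=> h; apply: contraTeq isT => nz.
have := @max_poly_roots _ S [seq i%:R | i <- iota 0 (size S)] nz.
rewrite size_map size_iota ltnn; apply.
  by apply/allP => x /mapP [i _ ->]; rewrite /root h.
rewrite map_inj_uniq ?iota_uniq // => i j /eqP; rewrite eqr_nat => /eqP //.
Qed.

Lemma hsum n (c : nat -> algC) (f : nat -> nat) x :
  (\sum_(0 <= i < n) c i *: B (f i)).[x] = \sum_(0 <= i < n) c i * (B (f i)).[x].
Proof. by rewrite horner_sum; under eq_bigr do rewrite hornerZ. Qed.

Lemma reprB n (P : {poly algC}) : (size P <= n)%N -> int_valued P ->
  exists a : nat -> algC, (forall k, a k \is a Num.int) /\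
    P = \sum_(0 <= k < n) a k *: B k.
Proof.
elim: n P => [|n IH] P hs hi.
  exists (fun _ => 0); split=> [k|]; first exact: rpred0.
  by rewrite big_geq //; apply/eqP; rewrite -size_poly_leq0.
have hQ : (size (Dl P) <= n)%N.
  by apply: leq_trans (sizeDl P) _; move: hs; case: (size P).
have [b [hb eQ]] := IH _ hQ (Dl_int hi).
exists (fun k => if k is k'.+1 then b k' else P.[0]); split.
  by case=> [|k] //; have := hi 0; rewrite mulr0z.
rewrite big_nat_recl //=.
apply/eqP; rewrite -subr_eq0; apply/eqP; apply: nat_roots.
have step : forall x, (P - (P.[0] *: B 0 + \sum_(0 <= i < n) b i *: B i.+1)).[x + 1]
   = (P - (P.[0] *: B 0 + \sum_(0 <= i < n) b i *: B i.+1)).[x].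
  move=> x; apply/eqP; rewrite -subr_eq0; apply/eqP.
  rewrite B0 !hornerD !hornerN !hornerD !hsum !hornerZ !hornerC.
  have e : P.[x + 1] - P.[x] = (Dl P).[x] by rewrite hornerDl.
  have e2 : (Dl P).[x] = \sum_(0 <= i < n) b i * (B i).[x] by rewrite {1}eQ hsum.
  have e3 : \sum_(0 <= i < n) b i * (B i.+1).[x + 1] - \sum_(0 <= i < n) b i * (B i.+1).[x]
     = \sum_(0 <= i < n) b i * (B i).[x].
    rewrite -sumrB; apply: eq_bigr => i _; rewrite -mulrBr pascal //.
  rewrite -e3 in e2; rewrite e2 in e.
  move: e; set u := P.[x+1]; set v := P.[x]; set s1 := \sum_(_ <= _ < _) _;
    set s2 := \sum_(_ <= _ < _) _ => e.
  have -> : u = v + (s1 - s2) by rewrite -e; ring.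
  ring.
elim=> [|i IHi].
  rewrite B0 hornerD hornerN hornerD hsum hornerZ ?horner1 ?hornerC.
  rewrite big1 ?addr0 ?mulr1 ?subrr // => i _; by rewrite BS0 mulr0.
by rewrite -natr1 step.
Qed.

Lemma lcm_gt0 n : (0 < lcm_upto n)%N.
Proof.
rewrite /lcm_upto big_seq; apply: (big_ind (fun x => 0 < x)%N) => //.
  by move=> x y hx hy; rewrite lcmn_gt0 hx hy.
by move=> i; rewrite mem_index_iota; case/andP.
Qed.

Lemma dvd_lcm n i : (0 < i <= n)%N -> (i %| lcm_upto n)%N.
Proof.
move=> hi; rewrite /lcm_upto (big_rem i) ?mem_index_iota ?ltnS //=.
exact: dvdn_lcml.
Qed.

Lemma lcm_dvd n c : (forall i, 0 < i <= n -> i %| c)%N -> (lcm_upto n %| c)%N.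
Proof.
move=> h; rewrite /lcm_upto big_seq; apply: (big_ind (fun x => x %| c)%N) => //.
  by move=> x y hx hy; rewrite dvdn_lcm hx hy.
by move=> i; rewrite mem_index_iota ltnS => /h.
Qed.

Lemma size_der (P : {poly algC}) : (size P^`() <= size P)%N.
Proof.
have [->|nz] := eqVneq P 0; first by rewrite deriv0.
exact: ltnW (lt_size_deriv nz).
Qed.

Lemma admL n : admissible n (lcm_upto n).
Proof.
move=> P [hs hi]; split.
  exact: leq_trans (size_scale_leq _ _) (leq_trans (size_der P) hs).
move=> z; rewrite hornerZ.
set c : algC := z%:~R.
pose Q := P \Po ('X + c%:P).
have hQs : (size Q <= n.+1)%N by rewrite size_comp_poly2 ?size_XaddC.
have hQi : int_valued Q.
  move=> w; rewrite horner_comp hornerD hornerX hornerC /c -intrD; exact: hi.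
have eQ : Q^`().[0] = P^`().[c].
  by rewrite /Q deriv_comp derivD derivX derivC addr0 mulr1 horner_comp
    hornerD hornerX hornerC add0r.
rewrite -eQ.
have [a [ha ->]] := reprB hQs hQi.
rewrite raddf_sum horner_sum mulr_sumr big_nat; apply: rpred_sum => k /andP[_ hk].
rewrite /= derivZ hornerZ.
case: k hk => [|k] hk.
  by rewrite B0 -polyC1 derivC horner0 !mulr0 rpred0.
rewrite dB0.
have hk2 : (k.+1 %| lcm_upto n)%N.
  exact: dvd_lcm.
have -> : (lcm_upto n)%:R * (a k.+1 * ((-1) ^+ k / k.+1%:R))
  = a k.+1 * (-1) ^+ k * ((lcm_upto n) %/ k.+1)%:R.
  rewrite natr_div // ?unitfE ?pnatr_eq0 //; ring.
by rewrite !rpredM ?rpredX ?rpredN ?rpred1 ?rpred_nat.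
Qed.

Theorem theorem1 (n : nat) (hn : (0 < n)%N) :
  [/\ (0 < lcm_upto n)%N, admissible n (lcm_upto n)
    & forall c : nat, (0 < c)%N -> admissible n c -> (lcm_upto n <= c)%N].
Proof.
split; [exact: lcm_gt0 | exact: admL |].
move=> c hc hadm; apply: dvdn_leq => //; apply: lcm_dvd.
case=> [|k] // /andP[_ hk].
have hB : Defs.inE n (B k.+1) by split; [rewrite sizeB | exact: B_int].
have [_ h] := hadm _ hB.
have := h 0; rewrite mulr0z hornerZ dB0 => hint.
rewrite -dvdC_nat unfold_in pnatr_eq0 /=.
have -> : c%:R / k.+1%:R = (-1) ^+ k * (c%:R * ((-1) ^+ k / k.+1%:R)) :> algC.
  have hs : ((-1) ^+ k * (-1) ^+ k = 1 :> algC) by rewrite -exprD -signr_odd oddD addbb expr0.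
  have h1 : (k.+1%:R : algC) != 0 by rewrite pnatr_eq0.
  by rewrite mulrCA (mulrA ((-1) ^+ k)) hs mul1r.
by rewrite rpredM ?rpredX ?rpredN ?rpred1.
Qed.
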